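(* Let $G$ be a finite group, $(C_1,C_2,C_3,C_4)$ a class vector of $G$ and $\rho_4$ the permutation representation of the pure braid group $B_4$ on $\Sigma^i(C_1,C_2,C_3,C_4)$. If $\rho_4(\beta_{12})$, $\rho_4(\beta_{13})$ and $\rho_4(\beta_{14})$ are involutions, then $\rho_4(B_4)\cong C_2\times C_2$.
   Context: A class vector is a tuple of non-trivial conjugacy classes. $\Sigma^i(C_1,\dots,C_4)$ is the set of $G$-conjugacy classes $[\sigma_1,\dots,\sigma_4]$ (simultaneous conjugation) of tuples with $\sigma_j\in C_j$, $\langle\sigma_1,\dots,\sigma_4\rangle=G$, $\sigma_1\sigma_2\sigma_3\sigma_4=\iota$ ($\iota$ the identity). The Hurwitz braid group $H_4=\langle\beta_2,\beta_3,\beta_4\rangle$ acts from the right by $[\underline{\sigma}]^{\beta_2}=[\sigma_1\sigma_2\sigma_1^{-1},\sigma_1,\sigma_3,\sigma_4]$, $[\underline{\sigma}]^{\beta_3}=[\sigma_1,\sigma_2\sigma_3\sigma_2^{-1},\sigma_2,\sigma_4]$, $[\underline{\sigma}]^{\beta_4}=[\sigma_1,\sigma_2,\sigma_3\sigma_4\sigma_3^{-1},\sigma_3]$. The pure braid group $B_4$ is generated by $\beta_{12}=\beta_2^2$, $\beta_{13}=\beta_2^{-1}\beta_3^2\beta_2$, $\beta_{14}=\beta_2^{-1}\beta_3^{-1}\beta_4^2\beta_3\beta_2$, $\beta_{23}=\beta_3^2$, $\beta_{24}=\beta_3^{-1}\beta_4^2\beta_3$, $\beta_{34}=\beta_4^2$,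 and preserves $\Sigma^i(C_1,\dots,C_4)$. An involution is an element of order $2$. *)

(* Defs.v *)
From HB Require Import structures.
From mathcomp Require Import all_boot all_fingroup.
Set Implicit Arguments. Unset Strict Implicit. Unset Printing Implicit Defensive.
Local Open Scope group_scope.

Section Braid4.
Variable gT : finGroupType.

Definition tup4 := (gT * gT * gT * gT)%type.

Definition conjt (t : tup4) (g : gT) : tup4 :=
  let: (a, b, c, d) := t in (a ^ g, b ^ g, c ^ g, d ^ g).

(* the Hurwitz generators beta_2, beta_3, beta_4 and their inverses, on tuples *)
Definition hb2 (t : tup4) : tup4 := let: (a, b, c, d) := t in (a * b * a^-1, a, c, d).
Definition hb3 (t : tup4) : tup4 := let: (a, b, c, d) := t in (a, b * c * b^-1, b, d).
Definition hb4 (t : tup4) : tup4 := let: (a, b, c, d) := t in (a, b, c * d * c^-1, c).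
Definition hb2i (t : tup4) : tup4 := let: (a, b, c, d) := t in (b, b^-1 * a * b, c, d).
Definition hb3i (t : tup4) : tup4 := let: (a, b, c, d) := t in (a, c, c^-1 * b * c, d).
Definition hb4i (t : tup4) : tup4 := let: (a, b, c, d) := t in (a, b, d, d^-1 * c * d).

Lemma hb2K : cancel hb2 hb2i.
Proof. by case=> [[[a b] c] d] /=; rewrite !mulgA ?mulVg ?mulgV ?mul1g ?mulgK ?mulgKV. Qed.
Lemma hb3K : cancel hb3 hb3i.
Proof. by case=> [[[a b] c] d] /=; rewrite !mulgA ?mulVg ?mulgV ?mul1g ?mulgK ?mulgKV. Qed.
Lemma hb4K : cancel hb4 hb4i.
Proof. by case=> [[[a b] c] d] /=; rewrite !mulgA ?mulVg ?mulgV ?mul1g ?mulgK ?mulgKV. Qed.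
Lemma hb2iK : cancel hb2i hb2.
Proof. by case=> [[[a b] c] d] /=; rewrite !mulgA ?mulVg ?mulgV ?mul1g ?mulgK ?mulgKV. Qed.
Lemma hb3iK : cancel hb3i hb3.
Proof. by case=> [[[a b] c] d] /=; rewrite !mulgA ?mulVg ?mulgV ?mul1g ?mulgK ?mulgKV. Qed.
Lemma hb4iK : cancel hb4i hb4.
Proof. by case=> [[[a b] c] d] /=; rewrite !mulgA ?mulVg ?mulgV ?mul1g ?mulgK ?mulgKV. Qed.

(* Right action: [s]^(w1 w2 ... wk) = wk (... (w1 s)), so a word acts as the
   composition wk \o ... \o w1. *)
Definition pb12 := hb2 \o hb2.
Definition pb13 := hb2 \o hb3 \o hb3 \o hb2i.                   (* beta_2^-1 beta_3^2 beta_2 *)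
Definition pb14 := hb2 \o hb3 \o hb4 \o hb4 \o hb3i \o hb2i.    (* beta_2^-1 beta_3^-1 beta_4^2 beta_3 beta_2 *)
Definition pb23 := hb3 \o hb3.
Definition pb24 := hb3 \o hb4 \o hb4 \o hb3i.                   (* beta_3^-1 beta_4^2 beta_3 *)
Definition pb34 := hb4 \o hb4.

Lemma pb12_inj : injective pb12.
Proof. by do !apply: inj_comp; apply: can_inj hb2K. Qed.
Lemma pb13_inj : injective pb13.
Proof.
by do !apply: inj_comp; first [apply: can_inj hb2K | apply: can_inj hb3K
  | apply: can_inj hb4K | apply: can_inj hb2iK | apply: can_inj hb3iK | apply: can_inj hb4iK].
Qed.
Lemma pb14_inj : injective pb14.
Proof.
by do !apply: inj_comp; first [apply: can_inj hb2K | apply: can_inj hb3K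
  | apply: can_inj hb4K | apply: can_inj hb2iK | apply: can_inj hb3iK | apply: can_inj hb4iK].
Qed.
Lemma pb23_inj : injective pb23.
Proof. by do !apply: inj_comp; apply: can_inj hb3K. Qed.
Lemma pb24_inj : injective pb24.
Proof.
by do !apply: inj_comp; first [apply: can_inj hb2K | apply: can_inj hb3K
  | apply: can_inj hb4K | apply: can_inj hb2iK | apply: can_inj hb3iK | apply: can_inj hb4iK].
Qed.
Lemma pb34_inj : injective pb34.
Proof. by do !apply: inj_comp; apply: can_inj hb4K. Qed.

(* The permutation of subsets of tuples induced by a pure braid
   (X |-> image of X); on G-conjugacy classes of tuples this is the braid action. *)
Definition setperm (f : tup4 -> tup4) (finj : injective f) : {perm {set tup4}} :=
  perm (imset_inj finj).

Definition P12 := setperm pb12_inj.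
Definition P13 := setperm pb13_inj.
Definition P14 := setperm pb14_inj.
Definition P23 := setperm pb23_inj.
Definition P24 := setperm pb24_inj.
Definition P34 := setperm pb34_inj.

Variables (G : {group gT}) (C1 C2 C3 C4 : {set gT}).

Definition class_vector :=
  [/\ C1 \in classes G, C2 \in classes G, C3 \in classes G & C4 \in classes G]
  /\ [/\ C1 != [set 1], C2 != [set 1], C3 != [set 1] & C4 != [set 1]].

Definition Einn : {set tup4} :=
  [set t : tup4 | let: (a, b, c, d) := t in
     [&& a \in C1, b \in C2, c \in C3, d \in C4,
         <<[set a; b; c; d]>> == G :> {set gT} & a * b * c * d == 1]].

Definition tclass (t : tup4) : {set tup4} := [set conjt t g | g in G].

Definition Sigma_in : {set {set tup4}} := [set tclass t | t in Einn].

Definition rho4 (p : {perm {set tup4}}) : {perm {set tup4}} := restr_perm Sigma_in p.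

Definition rho4_B4 : {set {perm {set tup4}}} :=
  restr_perm Sigma_in @* <<[set P12; P13; P14; P23; P24; P34]>>.

End Braid4.

(* Main.v *)
Require Import Defs.
From HB Require Import structures.
From mathcomp Require Import all_boot all_fingroup all_algebra all_solvable.
Set Implicit Arguments. Unset Strict Implicit. Unset Printing Implicit Defensive.
Local Open Scope group_scope.

Ltac gstep := first [rewrite mulgK | rewrite mulgKV | rewrite mulgV | rewrite mulVg | rewrite mul1g | rewrite mulg1 | rewrite invg1 | rewrite mulgA | rewrite invgK | rewrite invMg | rewrite conjgE ].
Ltac gnorm := repeat gstep.

Lemma Z22_abelem : abelem 2 [set: 'Z_2 * 'Z_2].
Proof.
have pm (p q : 'Z_2 * 'Z_2) : p * q = (p.1 * q.1, p.2 * q.2) by [].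
apply/abelemP => //; split.
  apply/centsP => [[u1 u2]] _ [v1 v2] _.
  by rewrite /commute !pm /= (Zp_mulgC u1) (Zp_mulgC u2).
move=> [u1 u2] _.
have h (w : 'Z_2) : w * w = 1.
  have c2 : #|[set: 'Z_2]| = 2 by rewrite cardsT card_ord.
  by have := expg_cardG (in_setT w); rewrite c2 expgS expg1.
by rewrite expgS expg1 pm /= !h.
Qed.

Lemma Z22_card : #|[set: 'Z_2 * 'Z_2]| = 4.
Proof. by rewrite cardsT card_prod card_ord. Qed.

Section Tup.
Variable gT : finGroupType.
Implicit Types (a b c g h : gT) (t : tup4 gT).

Lemma R1 a b c : pb14 (pb13 (pb12 (a, b, c, (a*b*c)^-1))) = conjt (a, b, c, (a*b*c)^-1) a^-1.
Proof. rewrite /pb12 /=; gnorm; rewrite /pb13 /=; gnorm; rewrite /pb14 /=; congr (_,_,_,_); by gnorm. Qed.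
Lemma R2 a b c : pb12 (a, b, c, (a*b*c)^-1) = conjt (pb34 (a, b, c, (a*b*c)^-1)) (a*b)^-1.
Proof. rewrite /pb12 /pb34 /=; congr (_,_,_,_); by gnorm. Qed.
Lemma R3 a b c : pb14 (a, b, c, (a*b*c)^-1) = conjt (pb23 (a, b, c, (a*b*c)^-1)) (b*c).
Proof. rewrite /pb14 /pb23 /=; congr (_,_,_,_); by gnorm. Qed.
Lemma R4 a b c : pb12 (pb24 (a, b, c, (a*b*c)^-1)) = conjt (pb13 (pb12 (a, b, c, (a*b*c)^-1))) (a*c).
Proof. rewrite /pb13 /pb12 /pb24 /=; congr (_,_,_,_); by gnorm. Qed.

Lemma conjt_comp t g h : conjt (conjt t g) h = conjt t (g * h).
Proof. by case: t => [[[a b] c] d] /=; rewrite !conjgM. Qed.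

Lemma hb2c t g : hb2 (conjt t g) = conjt (hb2 t) g.
Proof. by case: t => [[[a b] c] d] /=; rewrite ?conjMg ?conjVg. Qed.
Lemma hb3c t g : hb3 (conjt t g) = conjt (hb3 t) g.
Proof. by case: t => [[[a b] c] d] /=; rewrite ?conjMg ?conjVg. Qed.
Lemma hb4c t g : hb4 (conjt t g) = conjt (hb4 t) g.
Proof. by case: t => [[[a b] c] d] /=; rewrite ?conjMg ?conjVg. Qed.
Lemma hb2ic t g : hb2i (conjt t g) = conjt (hb2i t) g.
Proof. by case: t => [[[a b] c] d] /=; rewrite ?conjMg ?conjVg. Qed.
Lemma hb3ic t g : hb3i (conjt t g) = conjt (hb3i t) g.
Proof. by case: t => [[[a b] c] d] /=; rewrite ?conjMg ?conjVg. Qed.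
Lemma hb4ic t g : hb4i (conjt t g) = conjt (hb4i t) g.
Proof. by case: t => [[[a b] c] d] /=; rewrite ?conjMg ?conjVg. Qed.

Ltac hbc := rewrite ?hb2c ?hb3c ?hb4c ?hb2ic ?hb3ic ?hb4ic ?hb2c ?hb3c ?hb4c ?hb2ic ?hb3ic ?hb4ic ?hb2c ?hb3c ?hb4c.

Lemma pb12c t g : pb12 (conjt t g) = conjt (pb12 t) g.
Proof. by rewrite /pb12 /= !hb2c. Qed.
Lemma pb13c t g : pb13 (conjt t g) = conjt (pb13 t) g.
Proof. by rewrite /pb13 /= hb2ic !hb3c hb2c. Qed.
Lemma pb14c t g : pb14 (conjt t g) = conjt (pb14 t) g.
Proof. by rewrite /pb14 /= hb2ic hb3ic !hb4c hb3c hb2c. Qed.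
Lemma pb23c t g : pb23 (conjt t g) = conjt (pb23 t) g.
Proof. by rewrite /pb23 /= !hb3c. Qed.
Lemma pb24c t g : pb24 (conjt t g) = conjt (pb24 t) g.
Proof. by rewrite /pb24 /= hb3ic !hb4c hb3c. Qed.
Lemma pb34c t g : pb34 (conjt t g) = conjt (pb34 t) g.
Proof. by rewrite /pb34 /= !hb4c. Qed.

Variable G : {group gT}.

Lemma img_tclass (f : tup4 gT -> tup4 gT) t :
  (forall t g, f (conjt t g) = conjt (f t) g) -> f @: tclass G t = tclass G (f t).
Proof. by move=> fc; rewrite /tclass -imset_comp; apply: eq_imset => g /=; apply: fc. Qed.

Lemma tclass_conj t g : g \in G -> tclass G (conjt t g) = tclass G t.
Proof.
move=> Gg; apply/setP => u; apply/imsetP/imsetP => [[h Gh ->]|[h Gh ->]].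
  by exists (g * h); rewrite ?groupM // conjt_comp.
by exists (g^-1 * h); rewrite ?groupM ?groupV // conjt_comp mulKVg.
Qed.

Lemma P12E X : (P12 gT) X = @pb12 gT @: X. Proof. by rewrite /P12 /setperm permE. Qed.
Lemma P13E X : (P13 gT) X = @pb13 gT @: X. Proof. by rewrite /P13 /setperm permE. Qed.
Lemma P14E X : (P14 gT) X = @pb14 gT @: X. Proof. by rewrite /P14 /setperm permE. Qed.
Lemma P23E X : (P23 gT) X = @pb23 gT @: X. Proof. by rewrite /P23 /setperm permE. Qed.
Lemma P24E X : (P24 gT) X = @pb24 gT @: X. Proof. by rewrite /P24 /setperm permE. Qed.
Lemma P34E X : (P34 gT) X = @pb34 gT @: X. Proof. by rewrite /P34 /setperm permE. Qed.

Lemma tc12 t : @pb12 gT @: tclass G t = tclass G (pb12 t). Proof. exact: img_tclass pb12c. Qed.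
Lemma tc13 t : @pb13 gT @: tclass G t = tclass G (pb13 t). Proof. exact: img_tclass pb13c. Qed.
Lemma tc14 t : @pb14 gT @: tclass G t = tclass G (pb14 t). Proof. exact: img_tclass pb14c. Qed.
Lemma tc23 t : @pb23 gT @: tclass G t = tclass G (pb23 t). Proof. exact: img_tclass pb23c. Qed.
Lemma tc24 t : @pb24 gT @: tclass G t = tclass G (pb24 t). Proof. exact: img_tclass pb24c. Qed.
Lemma tc34 t : @pb34 gT @: tclass G t = tclass G (pb34 t). Proof. exact: img_tclass pb34c. Qed.

Lemma CsubG (C : {set gT}) : C \in classes G -> C \subset G.
Proof. by case/imsetP => x Gx ->; rewrite class_subG. Qed.

Variables (C1 C2 C3 C4 : {set gT}).
Hypothesis hCV : class_vector G C1 C2 C3 C4.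

Lemma Einn_dec t : t \in Einn G C1 C2 C3 C4 ->
  exists a b c, [/\ t = (a, b, c, (a*b*c)^-1), a \in G, b \in G & c \in G].
Proof.
case: hCV => [[h1 h2 h3 _] _].
case: t => [[[a b] c] d]; rewrite inE => /and5P [Ca Cb Cc _ /andP [_ /eqP e]].
exists a, b, c; split.
- by congr (_, _); apply/esym/eqP; rewrite eq_invg_mul e.
- exact: (subsetP (CsubG h1)).
- exact: (subsetP (CsubG h2)).
- exact: (subsetP (CsubG h3)).
Qed.

Local Notation S := (Sigma_in G C1 C2 C3 C4).

Lemma Sdec X : X \in S -> exists a b c,
  [/\ X = tclass G (a, b, c, (a*b*c)^-1), a \in G, b \in G & c \in G].
Proof.
case/imsetP => t Et ->; have [a [b [c [-> Ga Gb Gc]]]] := Einn_dec Et.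
by exists a, b, c.
Qed.

Lemma rel1 X : X \in S -> (P14 gT) ((P13 gT) ((P12 gT) X)) = X.
Proof.
case/Sdec => a [b [c [-> Ga Gb Gc]]].
by rewrite P12E tc12 P13E tc13 P14E tc14 R1 tclass_conj // groupV.
Qed.

Lemma rel34 X : X \in S -> (P34 gT) X = (P12 gT) X.
Proof.
case/Sdec => a [b [c [-> Ga Gb Gc]]].
by rewrite P34E tc34 P12E tc12 R2 tclass_conj // groupV groupM.
Qed.

Lemma rel23 X : X \in S -> (P23 gT) X = (P14 gT) X.
Proof.
case/Sdec => a [b [c [-> Ga Gb Gc]]].
by rewrite P14E tc14 R3 tclass_conj ?groupM // P23E tc23.
Qed.

Lemma rel24 X : X \in S -> (P12 gT) ((P24 gT) X) = (P13 gT) ((P12 gT) X).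
Proof.
case/Sdec => a [b [c [-> Ga Gb Gc]]].
by rewrite !P12E P13E P24E tc24 !tc12 tc13 R4 tclass_conj ?groupM.
Qed.

End Tup.

Lemma inN (T : finType) (S : {set T}) (q : {perm T}) :
  {in S, forall X, q X \in S} -> q \in 'N(S | 'P).
Proof. move=> h; rewrite !inE; apply/subsetP => X XS; rewrite inE /=; exact: h. Qed.

Lemma restr_eq (T : finType) (S : {set T}) (p q : {perm T}) :
  p \in 'N(S | 'P) -> {in S, p =1 q} -> restr_perm S p = restr_perm S q.
Proof.
move=> Np e.
have Nq : q \in 'N(S | 'P).
  apply: inN => X XS; rewrite -e //.
  by move/astabsP: Np => /(_ X) /= ->.
apply/permP => X; case: (boolP (X \in S)) => XS.
  by rewrite !restr_permE // e.
by rewrite !(out_perm (restr_perm_on _ _)).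
Qed.

Unset Implicit Arguments.

Theorem corollary3 (gT : finGroupType) (G : {group gT})
    (C1 C2 C3 C4 : {set gT}) :
  class_vector G C1 C2 C3 C4 ->
  #[rho4 G C1 C2 C3 C4 (P12 gT)] = 2%N ->
  #[rho4 G C1 C2 C3 C4 (P13 gT)] = 2%N ->
  #[rho4 G C1 C2 C3 C4 (P14 gT)] = 2%N ->
  rho4_B4 G C1 C2 C3 C4 \isog [set: 'Z_2 * 'Z_2].
Proof.
move=> hCV o12 o13 o14.
rewrite /rho4 in o12 o13 o14; rewrite /rho4_B4.
set S := Sigma_in G C1 C2 C3 C4 in o12 o13 o14 *.
have NN (p : {perm {set tup4 gT}}) : #[restr_perm S p] = 2 -> p \in 'N(S | 'P).
  move=> o; apply/negPn/negP => /triv_restr_perm h; move: o; rewrite h order1 //.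
have N12 := NN _ o12; have N13 := NN _ o13; have N14 := NN _ o14.
set x := restr_perm S (P12 gT) in o12 *.
set y := restr_perm S (P13 gT) in o13 *.
set z := restr_perm S (P14 gT) in o14 *.
have e1 : x * y * z = 1.
  have : restr_perm S (P12 gT * P13 gT * P14 gT) = restr_perm S 1.
    apply: restr_eq; first by rewrite !groupM.
    by move=> X XS; rewrite !permM perm1 (rel1 hCV).
  by rewrite !morphM ?groupM // morph1.
have e34 : restr_perm S (P34 gT) = x.
  by symmetry; apply: restr_eq => // X XS; rewrite (rel34 hCV).
have e23 : restr_perm S (P23 gT) = z.
  by symmetry; apply: restr_eq => // X XS; rewrite (rel23 hCV).
have e24 : restr_perm S (P24 gT) = x * y * x^-1.
  have : restr_perm S (P12 gT * P13 gT * (P12 gT)^-1) = restr_perm S (P24 gT).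
    apply: restr_eq; first by rewrite !groupM ?groupV.
    by move=> X XS; rewrite !permM -(rel24 hCV) // permK.
  by rewrite !morphM ?groupM ?groupV // morphV.
have xx : x * x = 1 by move: (expg_order x); rewrite o12.
have yy : y * y = 1 by move: (expg_order y); rewrite o13.
have zz : z * z = 1 by move: (expg_order z); rewrite o14.
have inv1 (u : {perm {set tup4 gT}}) : u * u = 1 -> u^-1 = u by move=> h; apply/eqP; rewrite eq_invg_mul h.
have ez : z = (x * y)^-1 by apply/eqP; rewrite eq_sym eq_invg_mul e1.
have yx : y * x = x * y.
  have E1 : z = y * x by rewrite ez invMg !inv1.
  by rewrite -E1 -(inv1 z zz) ez invgK.
have ezxy : z = x * y by rewrite ez invMg !inv1 // yx.
have e24' : x * y * x^-1 = y by rewrite inv1 // -mulgA yx mulgA xx mul1g.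
have r1 (u : {perm {set tup4 gT}}) : u * x * x = u by rewrite -mulgA xx mulg1.
have r2 (u : {perm {set tup4 gT}}) : u * y * y = u by rewrite -mulgA yy mulg1.
have r3 (u : {perm {set tup4 gT}}) : u * y * x = u * x * y by rewrite -!mulgA yx.
pose K := 1 |: (x |: (y |: [set x * y])).
have gK : group_set K.
  apply/group_setP; split; first by rewrite /K !inE eqxx.
  move=> u v; rewrite /K !inE -?orbA => /or4P [] /eqP -> /or4P [] /eqP ->;
  repeat first [rewrite mulgA | rewrite r1 | rewrite r2 | rewrite r3 | rewrite xx
     | rewrite yy | rewrite yx | rewrite mul1g | rewrite mulg1];
  by rewrite ?eqxx ?orbT.
pose KG := Group gK.
have NN' (p : {perm {set tup4 gT}}) : restr_perm S p != 1 -> p \in 'N(S | 'P).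
  by move=> h; apply/negPn/negP => /triv_restr_perm h'; rewrite h' eqxx in h.
have x1 : x != 1 by apply/eqP => h; move: o12; rewrite h order1.
have y1 : y != 1 by apply/eqP => h; move: o13; rewrite h order1.
have z1 : z != 1 by apply/eqP => h; move: o14; rewrite h order1.
have N34 : P34 gT \in 'N(S | 'P) by apply: NN'; rewrite e34.
have N23 : P23 gT \in 'N(S | 'P) by apply: NN'; rewrite e23.
have N24 : P24 gT \in 'N(S | 'P) by apply: NN'; rewrite e24 e24'.
set A := [set P12 gT; P13 gT; P14 gT; P23 gT; P24 gT; P34 gT].
have sAN : A \subset 'N(S | 'P).
  apply/subsetP => p Ap; rewrite /A !inE in Ap.
  by move: Ap => /orP[/orP[/orP[/orP[/orP[]|]|]|]|] /eqP ->.
have mx : x \in <<restr_perm S @* A>>.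
  by apply: mem_gen; apply: mem_morphim => //; rewrite /A !inE eqxx ?orbT.
have my : y \in <<restr_perm S @* A>>.
  by apply: mem_gen; apply: mem_morphim => //; rewrite /A !inE eqxx ?orbT.
have HK : restr_perm S @* <<A>> = K.
  rewrite morphim_gen //; apply/eqP; rewrite eqEsubset; apply/andP; split.
    rewrite -[K]/(gval KG) gen_subG; apply/subsetP => _ /morphimP [p Np Ap ->].
    move: Ap; rewrite /A !inE => /orP[/orP[/orP[/orP[/orP[]|]|]|]|] /eqP ->.
    - by rewrite eqxx ?orbT.
    - by rewrite eqxx ?orbT.
    - by rewrite (_ : restr_perm_morphism S (P14 gT) = x * y) ?eqxx ?orbT.
    - by rewrite (_ : restr_perm_morphism S (P23 gT) = x * y) ?eqxx ?orbT // -ezxy.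
    - by rewrite (_ : restr_perm_morphism S (P24 gT) = y) ?eqxx ?orbT // -e24'.
    - by rewrite (_ : restr_perm_morphism S (P34 gT) = x) ?eqxx ?orbT.
  apply/subsetP => u; rewrite /K !inE -?orbA => /or4P [] /eqP ->.
  - exact: group1.
  - exact: mx.
  - exact: my.
  - exact: groupM mx my.
have cardK : #|K| = 4.
  have d1 : (1 == x) = false by rewrite eq_sym; apply/negbTE.
  have d2 : (1 == y) = false by rewrite eq_sym; apply/negbTE.
  have d3 : (1 == x * y) = false.
    by apply/negbTE; apply: contra z1 => /eqP h; rewrite ezxy -h.
  have d4 : (x == y) = false.
    apply/negbTE; apply: contra z1 => /eqP h; rewrite ezxy -h xx.
    by [].
  have d5 : (x == x * y) = false.
    apply/negbTE; apply: contra y1 => /eqP h.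
    by rewrite -(mulKg x y) -h mulVg.
  have d6 : (y == x * y) = false.
    apply/negbTE; apply: contra x1 => /eqP h.
    by rewrite -(mulgK y x) -h mulgV.
  by rewrite /K !cardsU1 cards1 !inE d1 d2 d3 d4 d5 d6.
have c4 : #|restr_perm S @* <<A>>| = 4 by rewrite HK.
have abH0 : abelian (restr_perm S @* <<A>>).
  by apply: (card_p2group_abelian (p := 2)) => //; exact: c4.
have abH : abelem 2 (restr_perm S @* <<A>>).
  apply/abelemP => //; split => // u Hu.
  have : u \in K by rewrite -HK; exact: Hu.
  rewrite /K !inE -?orbA => /or4P [] /eqP ->;
  rewrite expgS expg1;
  repeat first [rewrite mulgA | rewrite r1 | rewrite r2 | rewrite r3 | rewrite xx
     | rewrite yy | rewrite yx | rewrite mul1g | rewrite mulg1]; by [].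
rewrite (isog_abelem_card _ abH) Z22_abelem Z22_card /=; apply/eqP; symmetry; exact: c4.
Qed.
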